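(* Let $n\ge1$ and consider nonempty compact subsets of $\mathbb{R}^n$ (''regions'') whose complement is nonempty. For a region $R$ and $\mathbf{x}\in\mathbb{R}^n$ let $d(R,\mathbf{x})=\inf\{\|\mathbf{x}-\mathbf{y}\|_2:\mathbf{y}\in R\}$, and similarly $d(R^c,\mathbf{x})$ for the complement $R^c=\mathbb{R}^n\setminus R$. Define the boundary dissimilarity $$d_{\mathrm{bd}}(R_1,R_2)=\begin{cases}-\min_{\mathbf{x}_2\in R_2} d(R_1^c,\mathbf{x}_2) & \text{if } R_2\subseteq R_1,\\ \sup_{\mathbf{x}_2\in R_2\setminus R_1} d(R_1,\mathbf{x}_2) & \text{otherwise.}\end{cases}$$ Then: (1) $d_{\mathrm{bd}}(R_1,R_2)\le 0$ if and only if $R_2\subseteq R_1$. Moreover, $d_{\mathrm{bd}}(R_1,R_2)=0$ if and only if $R_2$ is internally tangent to $R_1$, that is, $R_2\subseteq R_1$ and the boundaries $\partial R_1$ and $\partial R_2$ have a common point. (2) If $R_3\subseteq R_2\subseteq R_1$, then $d_{\mathrm{bd}}(R_1,R_3)\le d_{\mathrm{bd}}(R_1,R_2)$. *)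

(* Defs.v *)
From HB Require Import structures.
From mathcomp Require Import all_boot all_order all_algebra.
From mathcomp Require Import all_classical all_reals all_analysis.
Set Implicit Arguments. Unset Strict Implicit. Unset Printing Implicit Defensive.
Import Order.TTheory GRing.Theory Num.Theory.
Import numFieldNormedType.Exports.
Local Open Scope classical_set_scope.
Local Open Scope ring_scope.

Definition norm2 (R : realType) (n : nat) (x : 'rV[R]_n) : R :=
  Num.sqrt (\sum_(i < n) (x ord0 i) ^+ 2).

Definition region (R : realType) (n : nat) (A : set 'rV[R]_n) : Prop :=
  compact A /\ A !=set0 /\ (~` A) !=set0.

Definition dist_set (R : realType) (n : nat) (A : set 'rV[R]_n) (x : 'rV[R]_n) : R :=
  inf [set norm2 (x - y) | y in A].

Definition boundary (R : realType) (n : nat) (A : set 'rV[R]_n) : set 'rV[R]_n :=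
  closure A `\` interior A.

(* boundary dissimilarity; the "min" of the first case is written as an inf
   (it is attained since R2 is compact and d(R1^c, .) is continuous) *)
Definition dbd (R : realType) (n : nat) (R1 R2 : set 'rV[R]_n) : R :=
  if `[< R2 `<=` R1 >] then
    - inf [set dist_set (~` R1) x2 | x2 in R2]
  else
    sup [set dist_set R1 x2 | x2 in R2 `\` R1].

Definition internally_tangent (R : realType) (n : nat) (R1 R2 : set 'rV[R]_n) : Prop :=
  R2 `<=` R1 /\ (boundary R1 `&` boundary R2) !=set0.

(* Main.v *)
Require Import Defs.
From HB Require Import structures.
From mathcomp Require Import all_boot all_order all_algebra.
From mathcomp Require Import all_classical all_reals all_analysis.
From mathcomp Require Import lra.
Import Order.TTheory GRing.Theory Num.Theory.
Import numFieldNormedType.Exports.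
Local Open Scope classical_set_scope.
Local Open Scope ring_scope.

Section H.

Variables (R : realType) (n : nat).
Implicit Types (v x y z : 'rV[R]_n).

Lemma comp_le_norm v i : `|v ord0 i| <= `|v|.
Proof.
have -> : `|v| = mx_norm v by []. rewrite mx_normrE.
have -> : `|v ord0 i| = (fun ij : 'I_1 * 'I_n => `|v ij.1 ij.2|) (ord0, i) by [].
exact: (le_bigmax _ (fun ij : 'I_1 * 'I_n => `|v ij.1 ij.2|)).
Qed.

Lemma norm2_ge0 v : 0 <= norm2 v.
Proof. exact: sqrtr_ge0. Qed.

Lemma comp_le_norm2 v i : `|v ord0 i| <= norm2 v.
Proof.
rewrite /norm2 -sqrtr_sqr ler_sqrt; last by apply: sumr_ge0 => j _; exact: sqr_ge0.
rewrite (bigD1 i) //= lerDl; apply: sumr_ge0 => j _; exact: sqr_ge0.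
Qed.

Lemma norm_le_norm2 v : `|v| <= norm2 v.
Proof.
have -> : `|v| = mx_norm v by []. rewrite mx_normrE; apply: bigmax_le => [|[a j] _ /=]; first exact: norm2_ge0.
by rewrite (ord1 a); exact: comp_le_norm2.
Qed.

Lemma norm2_le v : norm2 v <= Num.sqrt n%:R * `|v|.
Proof.
rewrite /norm2 -[`|v|]normr_id -sqrtr_sqr -sqrtrM // ler_sqrt; last first.
  by apply: mulr_ge0 => //; exact: sqr_ge0.
apply: (@le_trans _ _ (\sum_(i < n) `|v| ^+ 2)).
  apply: ler_sum => j _; rewrite -real_normK ?num_real //.
  by rewrite lerXn2r ?nnegrE ?normr_ge0 // comp_le_norm.
by rewrite sumr_const card_ord mulr_natl ?normr_id.
Qed.

Lemma dist_ge0 A x : A !=set0 -> 0 <= dist_set A x.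
Proof.
move=> [y Ay]; apply: lb_le_inf; first by exists (norm2 (x - y)), y.
by move=> _ [z _ <-]; exact: norm2_ge0.
Qed.

Lemma dist_le A x y : A y -> dist_set A x <= norm2 (x - y).
Proof.
move=> Ay; apply: ge_inf; last by exists y.
by exists 0 => _ [z _ <-]; exact: norm2_ge0.
Qed.

Definition hd (A : set 'rV[R]_n) x := inf [set `|x - y| | y in A].

Lemma hd_le A x y : A y -> hd A x <= `|x - y|.
Proof.
move=> Ay; apply: ge_inf; last by exists y.
by exists 0 => _ [z _ <-]; exact: normr_ge0.
Qed.

Lemma hd_ge0 A x : A !=set0 -> 0 <= hd A x.
Proof.
move=> [y Ay]; apply: lb_le_inf; first by exists `|x - y|, y.
by move=> _ [z _ <-]; exact: normr_ge0.
Qed.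

Lemma hd_lip A x z : A !=set0 -> hd A x <= `|x - z| + hd A z.
Proof.
move=> [y0 Ay0]; rewrite -lerBlDl; apply: lb_le_inf; first by exists `|z - y0|, y0.
move=> _ [y Ay <-]; rewrite lerBlDl; apply: le_trans (@hd_le A x y Ay) _.
have -> : x - y = (x - z) + (z - y) by rewrite addrA subrK.
exact: ler_normD.
Qed.

Lemma hd_cont A : A !=set0 -> continuous (hd A).
Proof.
move=> A0 x; apply/(@cvgrPdist_lt _ R^o _ (nbhs x) (nbhs_filter x)) => e e0.
near=> z.
have : `|x - z| < e.
  by near: z; apply/nbhs_ballP; exists e => // z; rewrite -ball_normE.
apply: le_lt_trans; rewrite ler_distl; apply/andP; split.
  by rewrite lerBlDl distrC; exact: hd_lip.
by rewrite addrC; exact: hd_lip.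
Unshelve. all: by end_near.
Qed.

Lemma le0_of_forall (a : R) : (forall e, 0 < e -> a < e) -> a <= 0.
Proof. by move=> H; rewrite leNgt; apply/negP => a0; have := H a a0; rewrite ltxx. Qed.

Lemma sep (A : set 'rV[R]_n) x : closed A -> ~ A x ->
  exists2 e, 0 < e & forall y, A y -> e <= `|x - y|.
Proof.
move=> cA nAx; have := closed_openC cA; rewrite openE => /(_ x nAx).
move=> /nbhs_ballP [e e0 Hb]; exists e => // y Ay.
rewrite leNgt; apply/negP => lt; apply: (Hb y) Ay.
by rewrite -ball_normE.
Qed.

Lemma reg_closed (A : set 'rV[R]_n) : region A -> closed A.
Proof. by move=> [cA _]; apply: compact_closed => //; exact: norm_hausdorff. Qed.

Lemma dbd_sub (R1 R2 : set 'rV[R]_n) : R2 `<=` R1 ->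
  dbd R1 R2 = - inf [set dist_set (~` R1) x | x in R2].
Proof. by move=> H; rewrite /dbd asboolT. Qed.

Lemma dbd_nsub (R1 R2 : set 'rV[R]_n) : ~ R2 `<=` R1 ->
  dbd R1 R2 = sup [set dist_set R1 x2 | x2 in R2 `\` R1].
Proof. by move=> H; rewrite /dbd asboolF. Qed.

Lemma infS_ge0 (R1 R2 : set 'rV[R]_n) : region R1 -> R2 !=set0 ->
  0 <= inf [set dist_set (~` R1) x | x in R2].
Proof.
move=> [_ [_ A0]] [x R2x]; apply: lb_le_inf; first by exists (dist_set (~` R1) x), x.
by move=> _ [z _ <-]; exact: dist_ge0.
Qed.

Lemma infS_lb (R1 R2 : set 'rV[R]_n) : region R1 ->
  has_lbound [set dist_set (~` R1) x | x in R2].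
Proof. by move=> [_ [_ A0]]; exists 0 => _ [z _ <-]; exact: dist_ge0. Qed.

Lemma sup_pos (R1 R2 : set 'rV[R]_n) : region R1 -> region R2 -> ~ R2 `<=` R1 ->
  0 < sup [set dist_set R1 x2 | x2 in R2 `\` R1].
Proof.
move=> r1 r2 ns.
have [x [R2x nR1x]] : exists x, R2 x /\ ~ R1 x.
  by move/existsNP: ns => [x /not_implyP H]; exists x.
have [e e0 He] := @sep _ x (reg_closed _ r1) nR1x.
have [_ [[y0 R1y0] _]] := r1.
have le : e <= dist_set R1 x.
  apply: lb_le_inf; first by exists (norm2 (x - y0)), y0.
  by move=> _ [y R1y <-]; exact: le_trans (He y R1y) (norm_le_norm2 _).
apply: lt_le_trans e0 (le_trans le _).
apply: ub_le_sup; last by exists x.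
have [c2 _] := r2.
case: (compact_bounded c2) => M [Mr HM].
have MB : M < `|M| + 1 by rewrite (le_lt_trans (real_ler_norm Mr)) // ltrDl.
have HB := HM _ MB.
exists (Num.sqrt n%:R * ((`|M| + 1) + `|y0|)) => _ [z [R2z _] <-].
have h1 := dist_le R1 z y0 R1y0. apply: (le_trans h1).
apply: le_trans (norm2_le _) _.
apply: ler_wpM2l; first exact: sqrtr_ge0.
apply: le_trans (ler_normB _ _) _.
by rewrite lerD2r; exact: HB.
Qed.

Lemma tangent_of_zero (R1 R2 : set 'rV[R]_n) : region R1 -> region R2 -> R2 `<=` R1 ->
  inf [set dist_set (~` R1) x | x in R2] = 0 -> internally_tangent R1 R2.
Proof.
move=> r1 r2 sub H0.
have [_ [_ A0]] := r1.
have [c2 [ne2 _]] := r2.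
have [p R2p pmin] := @EVT_min_rV R n (hd (~` R1)) R2 ne2 c2
  (continuous_subspaceT (hd_cont _ A0)).
move: R2p; rewrite inE => R2p.
have hp0 : hd (~` R1) p <= 0.
  apply: le0_of_forall => e e0.
  have neS : [set dist_set (~` R1) x | x in R2] !=set0.
    by case: ne2 => x R2x; exists (dist_set (~` R1) x), x.
  have [_ [x R2x <-] fx] := @inf_lt _ _ e neS ltac:(by rewrite H0).
  have neT : [set norm2 (x - y) | y in ~` R1] !=set0.
    by case: A0 => y Ay; exists (norm2 (x - y)), y.
  have [_ [y Ay <-] ny] := @inf_lt _ _ e neT fx.
  apply: le_lt_trans (pmin x _) _; first by rewrite inE.
  apply: le_lt_trans (hd_le _ x _ Ay) _.
  exact: le_lt_trans (norm_le_norm2 _) ny.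
have nint : ~ interior R1 p.
  move=> /nbhs_ballP [e e0 Hb].
  have : e <= hd (~` R1) p.
    apply: lb_le_inf; first by case: A0 => y Ay; exists `|p - y|, y.
    move=> _ [y Ay <-]; rewrite leNgt; apply/negP => lt; apply: Ay; apply: Hb.
    by rewrite -ball_normE.
  move=> le; have := le_trans le hp0; rewrite leNgt e0 //.
split => //; exists p; split.
- by split => //; apply: subset_closure; exact: sub.
- split; first exact: subset_closure.
  by move=> int2; apply: nint; apply: filterS int2.
Qed.

Lemma zero_of_tangent (R1 R2 : set 'rV[R]_n) : region R1 -> region R2 ->
  internally_tangent R1 R2 -> inf [set dist_set (~` R1) x | x in R2] = 0.
Proof.
move=> r1 r2 [sub [p [[_ nint1] [cl2 _]]]].
have R2p : R2 p by rewrite (proj1 (closure_id R2) (reg_closed _ r2)).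
apply/eqP; rewrite eq_le; apply/andP; split; last by case: r2 => _ [ne2 _]; exact: infS_ge0 _ _ r1 ne2.
apply: le_trans (ge_inf (infS_lb _ R2 r1) _) _; first by exists p.
apply: le0_of_forall => e e0.
set s := Num.sqrt (n%:R : R).
have s0 : 0 <= s := sqrtr_ge0 _.
have s1 : s + 1 != 0 by rewrite gt_eqF // ltr_wpDl.
set e' := e / (s + 1).
have e'0 : 0 < e' by rewrite divr_gt0 // ltr_wpDl.
have ee : e' * (s + 1) = e by rewrite divfK.
have : ~ (ball p e' `<=` R1).
  by move=> Hb; apply: nint1; apply/nbhs_ballP; exists e'.
move/existsNP => [y /not_implyP [byp nR1y]].
move: byp; rewrite -ball_normE /= => lt.
apply: le_lt_trans (dist_le _ p _ nR1y) _.
apply: le_lt_trans (norm2_le _) _.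
have : s * `|p - y| <= s * e' by apply: ler_wpM2l => //; exact: ltW.
move=> h; rewrite -ee mulrDr mulr1 (mulrC e'); apply: (le_lt_trans h); rewrite ltrDl. exact: e'0.
Qed.

End H.

Theorem proposition3 (R : realType) (n : nat) (hn : (1 <= n)%N) :
  (forall R1 R2 : set 'rV[R]_n, region R1 -> region R2 ->
     (dbd R1 R2 <= 0 <-> R2 `<=` R1) /\
     (dbd R1 R2 = 0 <-> internally_tangent R1 R2)) /\
  (forall R1 R2 R3 : set 'rV[R]_n, region R1 -> region R2 -> region R3 ->
     R3 `<=` R2 -> R2 `<=` R1 -> dbd R1 R3 <= dbd R1 R2).
Proof.
split.
  move=> R1 R2 r1 r2; split; split.
  - move=> H; case: (pselect (R2 `<=` R1)) => // ns.
    by move: H; rewrite dbd_nsub // leNgt sup_pos.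
  - by move=> sub; rewrite dbd_sub // oppr_le0; by case: r2 => _ [ne2 _]; exact: infS_ge0 _ _ _ _ r1 ne2.
  - move=> H; case: (pselect (R2 `<=` R1)) => ns.
      apply: tangent_of_zero => //.
      by move: H; rewrite dbd_sub // => /eqP; rewrite oppr_eq0 => /eqP.
    by move: H; rewrite dbd_nsub // => H; have := sup_pos _ _ _ _ r1 r2 ns; rewrite H ltxx.
  - move=> t; have [sub _] := t.
    by rewrite dbd_sub // zero_of_tangent // oppr0.
move=> R1 R2 R3 r1 r2 r3 s32 s21.
rewrite !dbd_sub //; last exact: subset_trans s32 s21.
rewrite lerN2; apply: lb_le_inf.
  by case: r3 => _ [[x R3x] _]; exists (dist_set (~` R1) x), x.
move=> _ [x R3x <-]; apply: ge_inf; first exact: infS_lb _ _ _ _ r1.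
by exists x => //; exact: s32.
Qed.
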